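(* For every $n\geq0$, the dimension of the $n$th graded component of the quotient $\mathbf{ASM}/\mathcal{I}_{\operatorname{nw}}$ is $\binom{n}{2}+1$.
   Context: An ASM of size $n$ is an $n\times n$ matrix over $\{0,1,-1\}$ whose nonzero entries in every row and column alternate in sign, starting and ending with $+1$. For an ASM $\delta$, $\operatorname{nw}(\delta)$ is the number of positions $(i,j)$ with $\delta_{ij}=0$, $\sum_{i'<i}\delta_{i'j}=0$ and $\sum_{j'<j}\delta_{ij'}=1$ (the number of vertices of type nw in the associated six-vertex configuration with domain wall boundary conditions). $\mathbf{ASM}$ is the graded vector space (over $\mathbb{K}$ of characteristic zero) with basis $(\mathbf{F}_{M^\delta})$ indexed by ASMs, graded by size. $\mathcal{I}_{\operatorname{nw}}$ is the subspace spanned by all $\mathbf{F}_{M^{\delta_1}}-\mathbf{F}_{M^{\delta_2}}$ with $\delta_1,\delta_2$ ASMs of the same size satisfying $\operatorname{nw}(\delta_1)=\operatorname{nw}(\delta_2)$; the quotient is graded by size. *)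

(* Defs.v *)
From HB Require Import structures.
From mathcomp Require Import all_boot all_order all_algebra.

Set Implicit Arguments.
Unset Strict Implicit.
Unset Printing Implicit Defensive.

Import GRing.Theory Num.Theory.
Local Open Scope ring_scope.

(* Entries of an ASM are encoded by 'I_3 : 0 |-> 0, 1 |-> 1, 2 |-> -1. *)
Definition ent (e : 'I_3) : int :=
  match val e with 0%N => 0 | 1%N => 1 | _ => -1 end.

Definition alt_ok (s : seq int) : bool :=
  let t := [seq x <- s | x != 0] in
  odd (size t) && (t == mkseq (fun k => (-1) ^+ k) (size t)).

Definition is_asm (n : nat) (M : 'M[int]_n) : bool :=
  [forall i : 'I_n, alt_ok [seq M i j | j <- enum 'I_n]] &&
  [forall j : 'I_n, alt_ok [seq M i j | i <- enum 'I_n]].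

Definition ASM (n : nat) := {M : 'M['I_3]_n | is_asm (map_mx ent M)}.

Definition asm_mx (n : nat) (d : ASM n) : 'M[int]_n := map_mx ent (val d).

Definition nw (n : nat) (d : ASM n) : nat :=
  #|[set ij : 'I_n * 'I_n |
      [&& asm_mx d ij.1 ij.2 == 0,
          \sum_(i' < n | (i' < ij.1)%N) asm_mx d i' ij.2 == 0 &
          \sum_(j' < n | (j' < ij.2)%N) asm_mx d ij.1 j' == 1]]|.

(* n-th graded component of ASM: the K-vector space with basis (F_d)_{d ASM of size n} *)
Definition ASMn (K : fieldType) (n : nat) := {ffun ASM n -> K^o}.

Definition Fbasis (K : fieldType) (n : nat) (d : ASM n) : ASMn K n :=
  [ffun x : ASM n => ((x == d)%:R : K^o)].

Definition Inw (K : fieldType) (n : nat) : {vspace ASMn K n} :=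
  <<[seq Fbasis K p.1 - Fbasis K p.2 |
       p <- enum [pred p : (ASM n * ASM n)%type | nw p.1 == nw p.2]]>>%VS.

Definition quot_dim (K : fieldType) (n : nat) : nat :=
  (\dim (fullv : {vspace ASMn K n}) - \dim (Inw K n))%N.

(* Main.v *)
Require Import Defs.
From HB Require Import structures.
From mathcomp Require Import all_boot all_order all_algebra.
From mathcomp Require Import fingroup perm.
Set Implicit Arguments.
Unset Strict Implicit.
Unset Printing Implicit Defensive.
Import GRing.Theory Num.Theory.

Section LAsec.
Local Open Scope ring_scope.



Lemma dim_ffunK (K : fieldType) (I : finType) : dim {ffun I -> K^o} = #|I|.
Proof. rewrite /dim /=. have -> : dim K^o = 1%N. by []. by rewrite muln1. Qed.

Section LA.
Variables (K : fieldType) (n N : nat).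
Hypothesis H1 : forall d : ASM n, (nw d < N)%N.
Hypothesis H2 : forall v : 'I_N, exists d : ASM n, nw d = v.

Lemma H2b (v : 'I_N) : exists d : ASM n, nw d == v.
Proof. by have [d Hd] := H2 v; exists d; apply/eqP. Qed.

Definition rep (v : 'I_N) : ASM n := xchoose (H2b v).
Lemma repP v : nw (rep v) = v.
Proof. exact/eqP/(xchooseP (H2b v)). Qed.

Definition phi (f : ASMn K n) : {ffun 'I_N -> K^o} :=
  [ffun v : 'I_N => \sum_(d : ASM n | nw d == v) f d].
Lemma phi_lin : linear phi.
Proof.
move=> a u v; apply/ffunP=> i; rewrite !ffunE.
rewrite scaler_sumr -big_split /=.
by apply: eq_bigr => d _; rewrite !ffunE.
Qed.
HB.instance Definition _ := GRing.isLinear.Build _ _ _ _ phi phi_lin.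
Definition phiL : 'Hom(ASMn K n, {ffun 'I_N -> K^o}) := linfun phi.


Lemma phiF d : phi (Fbasis K d) = [ffun v : 'I_N => ((nw d == v)%:R : K^o)].
Proof.
apply/ffunP => v; rewrite !ffunE.
case: eqP => Hd.
  rewrite (bigD1 d) ?Hd //= ffunE eqxx big1 ?addr0 // => x /andP[_ /negbTE Hx].
  by rewrite ffunE Hx.
rewrite big1 // => x /eqP Hx; rewrite ffunE; case: eqP => // Exd.
by rewrite Exd in Hx.
Qed.

Lemma Inw_ker : (Inw K n <= lker phiL)%VS.
Proof.
apply/span_subvP => x /mapP [[a b]] /=; rewrite mem_enum /= => /eqP eab ->.
rewrite memv_ker lfunE /= linearB /= !phiF eab subrr.
done.
Qed.

Lemma ffun_decomp (f : ASMn K n) : f = \sum_(d : ASM n) f d *: Fbasis K d.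
Proof.
apply/ffunP => x; rewrite sum_ffunE (bigD1 x) //= big1 ?addr0.
  by rewrite !ffunE eqxx /= -[RHS]/(f x * 1) mulr1.
by move=> y /negbTE Hy; by rewrite !ffunE eq_sym Hy scaler0.
Qed.

Lemma dim_limg : \dim (limg phiL) = N.
Proof.
have -> : limg phiL = fullv.
  apply/eqP; rewrite eqEsubv subvf /=; apply/subvP => g _.
  have -> : g = phiL (\sum_(v : 'I_N) g v *: Fbasis K (rep v)).
    rewrite linear_sum /=; apply/ffunP => w; rewrite sum_ffunE.
    rewrite (bigD1 w) //= big1 ?addr0.
      rewrite linearZ /= lfunE /= phiF ffunE ffunE repP eqxx -[RHS]/(g w * 1) mulr1; reflexivity.
    move=> v /negbTE Hv; rewrite linearZ /= lfunE /= phiF ffunE ffunE repP.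
    have -> : (v == w :> nat) = false by rewrite (inj_eq val_inj).
    by rewrite scaler0.
  exact: memv_img (memvf _).
by rewrite dimvf dim_ffunK card_ord.
Qed.

Lemma quot_dim_eq : quot_dim K n = N.
Proof.
rewrite /quot_dim; apply/eqP; rewrite eqn_leq; apply/andP; split.
  set S := <<[seq Fbasis K (rep v) | v <- enum 'I_N]>>%VS.
  have sub : (fullv <= Inw K n + S)%VS.
    apply/subvP => f _; rewrite [f]ffun_decomp; apply: memv_suml => d _.
    apply: memvZ.
    pose r := rep (Ordinal (H1 d)).
    have Hr : nw r = nw d by rewrite repP.
    rewrite -[Fbasis K d](subrK (Fbasis K r)); apply: memv_add.
      apply: memv_span; apply/mapP; exists (d, r) => //.
      by rewrite mem_enum unfold_in /= Hr.
    by apply: memv_span; apply/mapP; exists (Ordinal (H1 d)) => //; rewrite mem_enum.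
  have := dimvS sub; have := dimv_add_leqif (Inw K n) S.
  have := dim_span [seq Fbasis K (rep v) | v <- enum 'I_N].
  rewrite size_map size_enum_ord -/S => h1 [h2 _] h3.
  rewrite leq_subLR; apply: (leq_trans h3); apply: (leq_trans h2).
  by rewrite leq_add2l.
have := limg_ker_dim phiL fullv; rewrite capfv dim_limg => h.
have := dimvS Inw_ker => h2.
rewrite leq_subRL; last exact: dimvS (subvf _).
by rewrite -h leq_add2r.
Qed.

End LA.
End LAsec.

Section Sec_C1.
Local Open Scope ring_scope.



Lemma alt_sum j : \sum_(x <- mkseq (fun k => (-1)^+k : int) j) x = (odd j)%:Z.
Proof.
rewrite /mkseq big_map; elim: j => [|j IH]; first by rewrite big_nil.
rewrite -addn1 iotaD big_cat /= IH big_cons big_nil addr0 add0n addn1 /=.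
by rewrite -signr_odd; case: (odd j).
Qed.

Lemma sum_nz (s : seq int) : \sum_(x <- [seq x <- s | x != 0]) x = \sum_(x <- s) x.
Proof.
rewrite big_filter big_mkcond /=; apply: eq_bigr => x _.
by case: eqP => // ->.
Qed.

Lemma alt_prefix s k : alt_ok s ->
  (\sum_(x <- take k s) x == 0) || (\sum_(x <- take k s) x == 1).
Proof.
case/andP => _ /eqP ht.
have hc := cat_take_drop k s.
have : [seq x <- take k s | x != 0] ++ [seq x <- drop k s | x != 0] =
        [seq x <- s | x != 0] by rewrite -filter_cat hc.
rewrite ht => hp.
have := take_size_cat [seq x <- drop k s | x != 0] (erefl (size [seq x <- take k s | x != 0])).
rewrite hp /mkseq -map_take take_iota -sum_nz => <-.
have := alt_sum (minn (size [seq x <- take k s | x != 0]) (size [seq x <- s | x != 0])).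
rewrite /mkseq => ->.
by move: (odd _) => [].
Qed.

Lemma alt_total s : alt_ok s -> \sum_(x <- s) x = 1.
Proof.
case/andP => ho /eqP ht.
by rewrite -sum_nz ht alt_sum ho.
Qed.

Lemma ord_prefix n (F : 'I_n -> int) k :
  \sum_(i < n | (i < k)%N) F i = \sum_(x <- take k [seq F i | i <- enum 'I_n]) x.
Proof.
elim: n F k => [|n IH] F k.
  by rewrite big_ord0 enum_ord0 /= big_nil.
rewrite enum_ordSl /= big_mkcond big_ord_recl /=.
case: k => [|k] /=.
  by rewrite big_nil add0r big1.
rewrite big_cons -map_comp -IH; congr (_ + _).
by rewrite [RHS]big_mkcond; apply: eq_bigr => i _.
Qed.

Lemma card_pairs n (P : pred ('I_n * 'I_n)) :
  #|[set ij | P ij]| = (\sum_i \sum_j (P (i, j) : nat))%N.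
Proof.
rewrite -sum1_card pair_big /= big_mkcond /=.
by apply: eq_bigr => [[i j]] _; rewrite inE /=; case: (P (i, j)).
Qed.

Lemma sum_tri n : (\sum_(i < n) (n - i.+1))%N = 'C(n, 2).
Proof.
elim: n => [|n IH]; first by rewrite big_ord0.
rewrite big_ord_recl /= subn1 /= binS bin1 -IH addnC; congr (_ + _)%N.
 
Qed.

Section ASMfacts.
Variables (n : nat) (d : ASM n).
Let A := asm_mx d.

Lemma row_alt i : alt_ok [seq A i j | j <- enum 'I_n].
Proof. by have /andP[/forallP h _] := valP d; exact: h. Qed.
Lemma col_alt j : alt_ok [seq A i j | i <- enum 'I_n].
Proof. by have /andP[_ /forallP h] := valP d; exact: h. Qed.

Definition Cs k j := \sum_(i < n | (i < k)%N) A i j.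

Lemma C01 k j : (Cs k j == 0) || (Cs k j == 1).
Proof. by rewrite /Cs ord_prefix; apply: alt_prefix; exact: col_alt. Qed.

Lemma row_sum i : \sum_j A i j = 1.
Proof.
rewrite (eq_bigl (fun j : 'I_n => (j < n)%N)); last by move=> j; rewrite ltn_ord.
rewrite ord_prefix take_oversize; last by rewrite size_map size_enum_ord.
exact: alt_total (row_alt i).
Qed.

Lemma sumC k : (k <= n)%N -> \sum_j Cs k j = k%:Z.
Proof.
move=> hk; rewrite /Cs exchange_big /=.
rewrite (eq_bigr (fun _ => 1)); last by move=> i _; exact: row_sum.
by rewrite -(big_ord_widen n (fun _ => (1 : int)) hk) sumr_const card_ord natz.
Qed.

Lemma cntC0 k : (k <= n)%N -> (\sum_j (Cs k j == 0 : nat))%N = (n - k)%N.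
Proof.
move=> hk.
have h1 : (\sum_j (Cs k j != 0 : nat))%N = k.
  apply/eqP; rewrite -(eqr_nat int) natr_sum [k%:R]natz -(sumC hk); apply/eqP.
  apply: eq_bigr => j _; have := C01 k j.
  by case/orP => /eqP ->.
have h2 : (\sum_j (Cs k j == 0 : nat) + \sum_j (Cs k j != 0 : nat))%N = n.
  rewrite -big_split /= -[RHS]card_ord -sum1_card; apply: eq_bigr => j _.
  by case: (_ == 0).
by move: h2; rewrite h1; move: (\sum_j _)%N => x <-; rewrite addnK.
Qed.

Lemma C_step (i j : 'I_n) : Cs i.+1 j = Cs i j + A i j.
Proof.
rewrite /Cs (bigD1 i) //= addrC; congr (_ + _).
apply: eq_bigl => i' /=; rewrite ltnS leq_eqVlt -(inj_eq val_inj) /=.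
by case: eqP => [->|] /=; rewrite ?ltnn ?andbT.
Qed.

Lemma nw_le : (nw d <= 'C(n, 2))%N.
Proof.
rewrite /nw card_pairs -sum_tri; apply: leq_sum => i _.
rewrite -cntC0 //; apply: leq_sum => j _.
rewrite /=; case H: (_ && _) => //; case/and3P: H => /eqP a0 /eqP c0 _.
by rewrite C_step /Cs /A c0 a0 addr0 eqxx.
Qed.

End ASMfacts.

End Sec_C1.

Section Sec_C2.
Local Open Scope ring_scope.



Definition ninv n (s : 'S_n) : nat := (\sum_(i < n) \sum_(k < n) ((i < k)%N && (s i < s k)%N))%N.

Lemma sum_geq n t : (\sum_(x < n) (t <= x))%N = (n - t)%N.
Proof.
elim: n => [|n IH]; first by rewrite big_ord0.
rewrite big_ord_recr /= IH; case: (leqP t n) => h.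
  by rewrite subSn // addn1.
have e1 : (n - t = 0)%N by apply/eqP; rewrite subn_eq0 ltnW.
have e2 : (n.+1 - t = 0)%N by apply/eqP; rewrite subn_eq0.
by rewrite e1 e2.
Qed.

Lemma lift_lt n (t : 'I_n.+1) (x : 'I_n) : (t < lift t x)%N = (t <= x)%N.
Proof.
rewrite /= /bump; case: (leqP t x) => h /=; first by rewrite add1n ltnS h.
by rewrite add0n ltnNge (ltnW h).
Qed.

Lemma lift_lt2 n (t : 'I_n.+1) (a b : 'I_n) : (lift t a < lift t b)%N = (a < b)%N.
Proof. by rewrite /= !ltnNge leq_bump2. Qed.

Lemma ninv_lift n (t : 'I_n.+1) (s : 'S_n) :
  ninv (lift_perm ord0 t s) = (n - t + ninv s)%N.
Proof.
rewrite /ninv big_ord_recl; congr (_ + _)%N.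
  rewrite big_ord_recl /= add0n.
  under eq_bigr => k _ do rewrite lift_perm_id lift_perm_lift lift_lt.
  by rewrite -sum_geq [RHS](reindex_inj (@perm_inj _ s)).
apply: eq_bigr => i _; rewrite big_ord_recl /= add0n.
apply: eq_bigr => k _; rewrite !lift_perm_lift lift_lt2.
by [].
Qed.

Lemma ninv_exists n v : (v <= 'C(n, 2))%N -> exists s : 'S_n, ninv s = v.
Proof.
elim: n v => [|n IH] v hv.
  exists 1%g; move: hv; rewrite /ninv big_ord0 bin0n leqn0 => /eqP ->. by [].
pose a := minn v 'C(n, 2); pose b := (v - a)%N.
have ha : (a <= 'C(n, 2))%N by rewrite geq_minr.
have hb : (b <= n)%N.
  move: hv; rewrite binS bin1 /b /a => hv.
  case: (leqP v 'C(n,2)) => h; first by rewrite subnn.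
  by rewrite leq_subLR.
have [s hs] := IH a ha.
have ht : (n - b < n.+1)%N by rewrite ltnS leq_subr.
exists (lift_perm ord0 (Ordinal ht) s).
rewrite ninv_lift /= hs subKn // /b subnK //; exact: geq_minl.
Qed.

End Sec_C2.

Section Sec_C3.
Local Open Scope ring_scope.



Definition one3 : 'I_3 := @Ordinal 3 1 isT.
Definition pmx n (s : 'S_n) : 'M['I_3]_n :=
  \matrix_(i, j) if s i == j then one3 else ord0.

Lemma pmx_ent n (s : 'S_n) i j :
  map_mx ent (pmx s) i j = if s i == j then 1 else 0.
Proof. by rewrite !mxE; case: (s i == j). Qed.

Lemma alt1 n (P : pred 'I_n) (a : 'I_n) (hP : forall x, P x = (x == a)) :
  alt_ok [seq (if P x then 1 else 0 : int) | x <- enum 'I_n].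
Proof.
rewrite /alt_ok filter_map.
rewrite (eq_filter (a2 := pred1 a)); last first.
  by move=> x /=; rewrite hP; case: (x == a).
rewrite filter_pred1_uniq ?enum_uniq ?mem_enum //= hP eqxx.
by [].
Qed.

Lemma pmx_asm n (s : 'S_n) : is_asm (map_mx ent (pmx s)).
Proof.
apply/andP; split; apply/forallP => i.
  under eq_map => j do rewrite pmx_ent.
  by apply: (alt1 (a := s i)) => x; rewrite eq_sym.
under eq_map => j do rewrite pmx_ent.
apply: (alt1 (a := (s^-1)%g i)) => x.
by apply/eqP/eqP => [<-|->]; rewrite ?permK ?permKV.
Qed.

Definition pasm n (s : 'S_n) : ASM n := exist _ (pmx s) (pmx_asm s).

Lemma sum_ind n (P : pred 'I_n) (a : 'I_n) :
  \sum_(x < n | P x) (if a == x then 1 else 0 : int) = (P a)%:R.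
Proof.
case Pa: (P a).
  rewrite (bigD1 a) //= eqxx big1 ?addr0 // => x /andP[_ hx].
  by rewrite eq_sym (negbTE hx).
rewrite big1 // => x Px; case: eqP => // ax.
by rewrite ax Px in Pa.
Qed.

Lemma nw_pasm n (s : 'S_n) : nw (pasm s) = ninv s.
Proof.
rewrite /nw card_pairs /ninv; apply: eq_bigr => i _.
rewrite (reindex_inj (@perm_inj _ s)) /=.
apply: eq_bigr => k _ /=.
rewrite /asm_mx /= !pmx_ent.
under eq_bigr => i' _ do rewrite pmx_ent (inj_eq (@perm_inj _ s)) eq_sym.
under [X in _ && (_ && (X == 1))]eq_bigr => j' _ do rewrite pmx_ent.
rewrite !sum_ind (inj_eq (@perm_inj _ s)).
case: (i =P k) => [->|ne]; first by rewrite ltnn.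
rewrite eqxx /=.
case: (ltngtP i k) => h //.
- by case: (s i < s k)%N.
- by case: ne; apply: val_inj.
Qed.

End Sec_C3.

Theorem proposition4p7 (K : fieldType) (charK0 : [pchar K]%R =i pred0) (n : nat) :
  quot_dim K n = ('C(n, 2) + 1)%N.
Proof.
have H1 : forall d : ASM n, (nw d < 'C(n, 2) + 1)%N.
  by move=> d; rewrite addn1 ltnS nw_le.
have H2 : forall v : 'I_('C(n, 2) + 1), exists d : ASM n, nw d = v.
  move=> v; have hv : (v <= 'C(n, 2))%N by have := ltn_ord v; move: (nat_of_ord v) => m; rewrite addn1 ltnS.
  have [s hs] := ninv_exists hv.
  by exists (pasm s); rewrite nw_pasm.
exact: quot_dim_eq H1 H2.
Qed.
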